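(* Let $g_1,g_2\in\mathcal{O}_3=\mathbb{R}\{t,x_1,x_2\}$ vanish at the origin, suppose $V(g_1,g_2)$ is a curve having an algebraically isolated singularity at the origin and $\dim_{\mathbb{R}}\mathcal{O}_3/\langle t,g_1,g_2\rangle<\infty$. Put $g_i'(t,x)=g_i(t^2,x)$, $i=1,2$. Then $\dim_{\mathbb{R}}\mathcal{O}_3/\langle t,g_1',g_2'\rangle<\infty$ and $V(g_1',g_2')$ is a curve having an algebraically isolated singularity at the origin.
   Context: $\mathcal{O}_3$ is the ring of real analytic germs at the origin in $(t,x_1,x_2)$. For $w_1,\dots,w_m\in\mathcal{O}_3$ vanishing at $\mathbf 0$, let $W$ be the ideal generated by $w_1,\dots,w_m$ and all $2\times2$ minors of the Jacobian matrix of $(w_1,\ldots,w_m)$ with respect to $(t,x_1,x_2)$; $V(w_1,\dots,w_m)$ is a curve having an algebraically isolated singularity at the origin if $W$ is proper and $\dim_{\mathbb{R}}\mathcal{O}_3/W<\infty$. *)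

(* Defs.v *)
(* Real analytic germs at 0 in (t,x1,x2) are modelled, as usual,
   by convergent real power series in three variables (O_3 = R{t,x1,x2}).
   A power series is its coefficient function: f i j k = coeff of t^i x1^j x2^k. *)
From Stdlib Require Import Reals List Arith.
Open Scope R_scope.

Definition ps := nat -> nat -> nat -> R.

(* convergence of the series on some polydisc (Abel's lemma: bounded coefficients
   times r^(i+j+k) for some r>0) *)
Definition convergent (f : ps) : Prop :=
  exists r M : R, 0 < r /\ forall i j k, Rabs (f i j k) * r ^ (i + j + k) <= M.

Definition ps_zero : ps := fun _ _ _ => 0.
Definition ps_one : ps := fun i j k =>
  match i, j, k with O, O, O => 1 | _, _, _ => 0 end.
Definition ps_t : ps := fun i j k =>
  match i, j, k with 1%nat, O, O => 1 | _, _, _ => 0 end.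
Definition ps_add (f g : ps) : ps := fun i j k => f i j k + g i j k.
Definition ps_opp (f : ps) : ps := fun i j k => - f i j k.
Definition ps_scale (c : R) (f : ps) : ps := fun i j k => c * f i j k.

Fixpoint sumR (n : nat) (u : nat -> R) : R :=
  match n with O => 0 | S n' => sumR n' u + u n' end.

Definition ps_mul (f g : ps) : ps := fun i j k =>
  sumR (S i) (fun a => sumR (S j) (fun b => sumR (S k) (fun c =>
    f a b c * g (i - a)%nat (j - b)%nat (k - c)%nat))).

(* partial derivatives: variable 0 = t, 1 = x1, 2 = x2 *)
Definition ps_deriv (v : nat) (f : ps) : ps := fun i j k =>
  match v with
  | O => INR (S i) * f (S i) j k
  | 1%nat => INR (S j) * f i (S j) k
  | _ => INR (S k) * f i j (S k)
  end.

Definition vanishes_at_0 (f : ps) : Prop := f O O O = 0.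

Definition subst_t_sq (g : ps) : ps := fun i j k =>
  if Nat.even i then g (Nat.div2 i) j k else 0.

Fixpoint lin_comb (cs gs : list ps) : ps :=
  match cs, gs with
  | c :: cs', g :: gs' => ps_add (ps_mul c g) (lin_comb cs' gs')
  | _, _ => ps_zero
  end.

Definition in_ideal (gs : list ps) (f : ps) : Prop :=
  exists cs : list ps, length cs = length gs /\ Forall convergent cs /\
    f = lin_comb cs gs.

Definition ideal_proper (gs : list ps) : Prop := ~ in_ideal gs ps_one.

Fixpoint real_comb (cs : list R) (es : list ps) : ps :=
  match cs, es with
  | c :: cs', e :: es' => ps_add (ps_scale c e) (real_comb cs' es')
  | _, _ => ps_zero
  end.

Definition finite_codim (gs : list ps) : Prop :=
  exists es : list ps, Forall convergent es /\
    forall f, convergent f ->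
      exists cs : list R, length cs = length es /\
        in_ideal gs (ps_add f (ps_opp (real_comb cs es))).

Definition minor2 (w w' : ps) (a b : nat) : ps :=
  ps_add (ps_mul (ps_deriv a w) (ps_deriv b w'))
         (ps_opp (ps_mul (ps_deriv b w) (ps_deriv a w'))).

Definition var_pairs : list (nat * nat) := (0%nat, 1%nat) :: (0%nat, 2%nat) :: (1%nat, 2%nat) :: nil.

Fixpoint all_minors (ws : list ps) : list ps :=
  match ws with
  | nil => nil
  | w :: ws' =>
      flat_map (fun w' => map (fun p => minor2 w w' (fst p) (snd p)) var_pairs) ws'
      ++ all_minors ws'
  end.

Definition W_gens (ws : list ps) : list ps := ws ++ all_minors ws.

Definition curve_alg_isolated_sing (ws : list ps) : Prop :=
  Forall convergent ws /\ Forall vanishes_at_0 ws /\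
  ideal_proper (W_gens ws) /\ finite_codim (W_gens ws).

(* Main.v *)
Set Warnings "-notation-overridden,-ambiguous-paths".
Require Import Defs.
From Stdlib Require Import Reals List FunctionalExtensionality Lia Lra.
From mathcomp Require all_boot all_algebra Rstruct zify.

Module PolyPart.
Import all_boot all_algebra Rstruct zify.
Import GRing.Theory.
Local Open Scope ring_scope.

Definition P3 := {poly {poly {poly R}}}.
Definition coef3 (P : P3) (i j k : nat) : R := P`_i`_j`_k.

Lemma sumR_big n (u : nat -> R) : sumR n u = \sum_(a < n) u a.
Proof.
elim: n => [|n IH]; first by rewrite big_ord0.
by rewrite big_ord_recr /= IH.
Qed.

Lemma coef3M P Q i j k : coef3 (P * Q) i j k =
  sumR (S i) (fun a => sumR (S j) (fun b => sumR (S k) (fun c =>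
    coef3 P a b c * coef3 Q (i - a)%nat (j - b)%nat (k - c)%nat))).
Proof.
rewrite /coef3 coefM sumR_big coef_sum coef_sum.
apply: eq_bigr => a _.
rewrite coefM sumR_big coef_sum.
apply: eq_bigr => b _.
by rewrite coefM sumR_big.
Qed.

Definition agree n (f : ps) (P : P3) := forall a b c, (a < n)%N -> (b < n)%N -> (c < n)%N ->
  f a b c = coef3 P a b c.

Lemma sumR_ext_lt n (u v : nat -> R) : (forall x, (x < n)%N -> u x = v x) -> sumR n u = sumR n v.
Proof.
elim: n => [|n IH] H //=.
rewrite IH ?H // => x Hx; apply: H; exact: ltnW.
Qed.

Lemma agree_mul n f g P Q : agree n f P -> agree n g Q -> agree n (ps_mul f g) (P * Q).
Proof.
move=> Hf Hg a b c Ha Hb Hc; rewrite coef3M /ps_mul.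
apply: sumR_ext_lt => x Hx; apply: sumR_ext_lt => y Hy; apply: sumR_ext_lt => z Hz.
congr (_ * _); [apply: Hf | apply: Hg]; lia.
Qed.

Lemma agree_add n f g P Q : agree n f P -> agree n g Q -> agree n (ps_add f g) (P + Q).
Proof. by move=> Hf Hg a b c Ha Hb Hc; rewrite /ps_add Hf // Hg // /coef3 !coefD. Qed.

Lemma agree_opp n f P : agree n f P -> agree n (ps_opp f) (- P).
Proof. by move=> Hf a b c Ha Hb Hc; rewrite /ps_opp Hf // /coef3 !coefN. Qed.

Definition trunc n (f : ps) : P3 := \poly_(i < n) \poly_(j < n) \poly_(k < n) f i j k.

Lemma agree_trunc n f : agree n f (trunc n f).
Proof. by move=> a b c Ha Hb Hc; rewrite /coef3 /trunc coef_poly Ha coef_poly Hb coef_poly Hc. Qed.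

Lemma agree_one n : agree n ps_one 1.
Proof.
move=> a b c _ _ _; rewrite /coef3 coef1.
case: a => [|a] /=; last by rewrite !coef0.
rewrite coef1; case: b => [|b] /=; last by rewrite !coef0.
by rewrite coef1; case: c.
Qed.

Lemma agree_t n : agree n ps_t 'X.
Proof.
move=> a b c _ _ _; rewrite /coef3 coefX.
case: a => [|[|a]] /=; rewrite ?coef0 //.
rewrite coef1; case: b => [|b] /=; last by rewrite !coef0.
by rewrite coef1; case: c.
Qed.

Lemma evenE a : Nat.even a = ~~ odd a.
Proof.
elim: a => [|a IH] //.
by rewrite Nat.even_succ -Nat.negb_even IH /= negbK.
Qed.

Lemma div2E' a : Nat.div2 a = a./2 /\ Nat.div2 a.+1 = a.+1./2.
Proof.
elim: a => [|a [IH1 IH2]] //; split => //.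
by rewrite [LHS]/= IH1.
Qed.

Lemma div2E a : Nat.div2 a = a./2.
Proof. by case: (div2E' a). Qed.

Lemma agree_subst n f P : agree n f P -> agree n (subst_t_sq f) (P \Po 'X^2).
Proof.
move=> Hf a b c Ha Hb Hc; rewrite /coef3 coef_comp_poly_Xn // /subst_t_sq.
rewrite evenE dvdn2 div2E divn2.
case: (~~ odd a) => //; last by rewrite !coef0.
apply: Hf => //; rewrite -divn2; exact: leq_ltn_trans (leq_div _ _) Ha.
Qed.

Lemma ps_eq (f g : ps) : (forall n, exists P, agree n f P /\ agree n g P) -> f = g.
Proof.
move=> H; apply: functional_extensionality => i; apply: functional_extensionality => j;
apply: functional_extensionality => k.
have [P [H1 H2]] := H (i + j + k).+1.
rewrite H1 ?H2 //; lia.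
Qed.

Lemma ps_mul_comm f g : ps_mul f g = ps_mul g f.
Proof.
apply: ps_eq => n; exists (trunc n f * trunc n g); split; first by apply: agree_mul; apply: agree_trunc.
rewrite mulrC; by apply: agree_mul; apply: agree_trunc.
Qed.

Lemma ps_mul_assoc f g h : ps_mul f (ps_mul g h) = ps_mul (ps_mul f g) h.
Proof.
apply: ps_eq => n; exists (trunc n f * trunc n g * trunc n h); split.
  rewrite -mulrA; by do ! (apply: agree_mul); apply: agree_trunc.
by do ! (apply: agree_mul); apply: agree_trunc.
Qed.

Lemma ps_mul_1_l f : ps_mul ps_one f = f.
Proof.
apply: ps_eq => n; exists (1 * trunc n f); split.
  by apply: agree_mul; [apply: agree_one | apply: agree_trunc].
rewrite mul1r; exact: agree_trunc.
Qed.

Lemma ps_mul_add_l f g h : ps_mul (ps_add f g) h = ps_add (ps_mul f h) (ps_mul g h).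
Proof.
apply: ps_eq => n; exists ((trunc n f + trunc n g) * trunc n h); split.
  by apply: agree_mul; [apply: agree_add|]; apply: agree_trunc.
rewrite mulrDl; by apply: agree_add; apply: agree_mul; apply: agree_trunc.
Qed.

Lemma subst_mul f g : subst_t_sq (ps_mul f g) = ps_mul (subst_t_sq f) (subst_t_sq g).
Proof.
apply: ps_eq => n; exists ((trunc n f * trunc n g) \Po 'X^2); split.
  by apply: agree_subst; apply: agree_mul; apply: agree_trunc.
rewrite comp_polyM; by apply: agree_mul; apply: agree_subst; apply: agree_trunc.
Qed.

Lemma agree_scale n c f P : agree n f P -> agree n (ps_scale c f) (c%:P%:P%:P * P).
Proof. by move=> Hf a b d Ha Hb Hd; rewrite /ps_scale Hf // /coef3 !coefCM. Qed.

Lemma ps_mul_scale_l c f g : ps_mul (ps_scale c f) g = ps_scale c (ps_mul f g).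
Proof.
apply: ps_eq => n; exists (c%:P%:P%:P * trunc n f * trunc n g); split.
  by apply: agree_mul; [apply: agree_scale|]; apply: agree_trunc.
rewrite -mulrA; by apply: agree_scale; apply: agree_mul; apply: agree_trunc.
Qed.

Lemma subst_t : subst_t_sq ps_t = ps_mul ps_t ps_t.
Proof.
apply: ps_eq => n; exists ('X \Po 'X^2); split; first by apply: agree_subst; apply: agree_t.
rewrite comp_polyX expr2; by apply: agree_mul; apply: agree_t.
Qed.

Lemma ps_mul_t h i j k : ps_mul ps_t h i j k = match i with O => 0%R | S i' => h i' j k end.
Proof.
have H1 : agree (i+j+k).+1 (ps_mul ps_t h) ('X * trunc (i+j+k).+1 h).
  by apply: agree_mul; [apply: agree_t|apply: agree_trunc].
rewrite H1; try lia.
rewrite /coef3 coefXM; case: i H1 => [|i] H1 /=; first by rewrite !coef0.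
rewrite -/(coef3 _ i j k) -agree_trunc //; lia.
Qed.

End PolyPart.

Import PolyPart.
Open Scope R_scope.

Definition ps_sub f g := ps_add f (ps_opp g).

Lemma ps_ext3 (f g : ps) : (forall i j k, f i j k = g i j k) -> f = g.
Proof.
intros H; apply functional_extensionality; intro i; apply functional_extensionality; intro j;
apply functional_extensionality; intro k; apply H.
Qed.

Lemma ps_ring_theory : ring_theory ps_zero ps_one ps_add ps_mul ps_sub ps_opp (@eq ps).
Proof.
constructor; intros.
- apply ps_ext3; intros; unfold ps_add, ps_zero; ring.
- apply ps_ext3; intros; unfold ps_add; ring.
- apply ps_ext3; intros; unfold ps_add; ring.
- apply ps_mul_1_l.
- apply ps_mul_comm.
- apply ps_mul_assoc.
- apply ps_mul_add_l.
- reflexivity.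
- apply ps_ext3; intros; unfold ps_add, ps_opp, ps_zero; ring.
Qed.

Add Ring psRing : ps_ring_theory.

Definition cst (c : R) : ps := ps_scale c ps_one.

Lemma scale_cst c f : ps_scale c f = ps_mul (cst c) f.
Proof. unfold cst; rewrite ps_mul_scale_l, ps_mul_1_l; reflexivity. Qed.

Lemma cst_mul a b : ps_mul (cst a) (cst b) = cst (a * b).
Proof.
unfold cst at 1; rewrite ps_mul_scale_l, ps_mul_1_l.
apply ps_ext3; intros; unfold cst, ps_scale; ring.
Qed.

Lemma cst1 : cst 1 = ps_one.
Proof. apply ps_ext3; intros; unfold cst, ps_scale; ring. Qed.

Lemma half2 : ps_mul (cst (/2)) (cst 2) = ps_one.
Proof. rewrite cst_mul. replace (/2 * 2) with 1 by field. apply cst1. Qed.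

Goal forall x y : ps, ps_mul (ps_mul (cst (/2)) x) (ps_mul (cst 2) y) = ps_mul x y.
intros. ring [half2].
Qed.

Notation phi := subst_t_sq.

Lemma ps_mul_t' h i j k : ps_mul ps_t h i j k = match i with O => 0 | S i' => h i' j k end.
Proof. exact (ps_mul_t h i j k). Qed.
Notation t := ps_t.

Lemma phi_add f g : phi (ps_add f g) = ps_add (phi f) (phi g).
Proof. apply ps_ext3; intros; unfold phi, ps_add; destruct (Nat.even i); ring. Qed.
Lemma phi_opp f : phi (ps_opp f) = ps_opp (phi f).
Proof. apply ps_ext3; intros; unfold phi, ps_opp; destruct (Nat.even i); ring. Qed.
Lemma phi_scale c f : phi (ps_scale c f) = ps_scale c (phi f).
Proof. apply ps_ext3; intros; unfold phi, ps_scale; destruct (Nat.even i); ring. Qed.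
Lemma phi_zero : phi ps_zero = ps_zero.
Proof. apply ps_ext3; intros; unfold phi, ps_zero; destruct (Nat.even i); ring. Qed.
Lemma phi_one : phi ps_one = ps_one.
Proof.
apply ps_ext3; intros; unfold phi, ps_one.
destruct i as [|[|i]]; simpl; auto.
destruct (Nat.even i); auto.
Qed.
Lemma phi_cst c : phi (cst c) = cst c.
Proof. unfold cst; rewrite phi_scale, phi_one; reflexivity. Qed.

Lemma even_div2 i : Nat.even i = true -> i = (2 * Nat.div2 i)%nat.
Proof.
intros H; rewrite (Nat.div2_odd i) at 1.
rewrite <- Nat.negb_even, H; simpl; lia.
Qed.

Lemma deriv0_phi g : ps_deriv 0 (phi g) = ps_mul (cst 2) (ps_mul t (phi (ps_deriv 0 g))).
Proof.
rewrite <- scale_cst; apply ps_ext3; intros i j k.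
unfold ps_scale; rewrite ps_mul_t'; unfold ps_deriv, phi.
destruct i as [|i]; [simpl; ring|].
change (Nat.even (S (S i))) with (Nat.even i).
change (Nat.div2 (S (S i))) with (S (Nat.div2 i)).
destruct (Nat.even i) eqn:E; [|ring].
pose proof (even_div2 i E) as Hi.
set (d := Nat.div2 i) in *.
rewrite Hi at 1. rewrite !S_INR, mult_INR. simpl. ring.
Qed.

Lemma deriv1_phi g : ps_deriv 1 (phi g) = phi (ps_deriv 1 g).
Proof. apply ps_ext3; intros; unfold ps_deriv, phi; destruct (Nat.even i); ring. Qed.
Lemma deriv2_phi g : ps_deriv 2 (phi g) = phi (ps_deriv 2 g).
Proof. apply ps_ext3; intros; unfold ps_deriv, phi; destruct (Nat.even i); ring. Qed.

Lemma minor01 g1 g2 : minor2 (phi g1) (phi g2) 0 1 = ps_mul (cst 2) (ps_mul t (phi (minor2 g1 g2 0 1))).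
Proof.
unfold minor2; rewrite deriv0_phi, deriv0_phi, deriv1_phi, deriv1_phi.
rewrite phi_add, phi_opp, !subst_mul. ring.
Qed.
Lemma minor02 g1 g2 : minor2 (phi g1) (phi g2) 0 2 = ps_mul (cst 2) (ps_mul t (phi (minor2 g1 g2 0 2))).
Proof.
unfold minor2; rewrite deriv0_phi, deriv0_phi, deriv2_phi, deriv2_phi.
rewrite phi_add, phi_opp, !subst_mul. ring.
Qed.
Lemma minor12 g1 g2 : minor2 (phi g1) (phi g2) 1 2 = phi (minor2 g1 g2 1 2).
Proof.
unfold minor2; rewrite deriv1_phi, deriv1_phi, deriv2_phi, deriv2_phi.
rewrite phi_add, phi_opp, !subst_mul. ring.
Qed.

Definition ev (f : ps) : ps := fun i j k => f (2 * i)%nat j k.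
Definition od (f : ps) : ps := fun i j k => f (S (2 * i))%nat j k.

Lemma even_double m : Nat.even (2 * m) = true.
Proof. induction m; [reflexivity|]. replace (2 * S m)%nat with (S (S (2 * m))) by lia. exact IHm. Qed.
Lemma div2_double' m : Nat.div2 (2 * m) = m.
Proof. apply Nat.div2_double. Qed.
Lemma even_double1 m : Nat.even (S (2 * m)) = false.
Proof. rewrite Nat.even_succ, <- Nat.negb_even, even_double; reflexivity. Qed.

Lemma ev_od f : f = ps_add (phi (ev f)) (ps_mul t (phi (od f))).
Proof.
apply ps_ext3; intros i j k; unfold ps_add; rewrite ps_mul_t'; unfold phi, ev, od.
destruct (Nat.Even_or_Odd i) as [[m Hm]|[m Hm]]; subst i.
- rewrite even_double, div2_double'. destruct m as [|m]; [simpl; ring|].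
  replace (2 * S m)%nat with (S (S (2 * m))) by lia.
  change (Nat.even (S (2*m))) with (Nat.even (S (2*m))). rewrite even_double1. ring.
- replace (2 * m + 1)%nat with (S (2 * m)) by lia.
  rewrite even_double1, even_double, div2_double'. ring.
Qed.

Lemma ev_unique A B C : ps_add (phi A) (ps_mul t (phi B)) = C -> A = ev C.
Proof.
intros H; subst C; apply ps_ext3; intros i j k; unfold ev, ps_add; rewrite ps_mul_t'; unfold phi.
rewrite even_double, div2_double'. destruct i as [|i]; [simpl; ring|].
replace (2 * S i)%nat with (S (S (2 * i))) by lia.
rewrite even_double1; ring.
Qed.

Lemma ev_one : ev ps_one = ps_one.
Proof. apply ps_ext3; intros [|i] j k; unfold ev; simpl; auto. Qed.

Definition z0 (f : ps) : ps := fun i j k => match i with O => f O j k | _ => 0 end.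
Definition sh (f : ps) : ps := fun i j k => f (S i) j k.

Lemma z0_sh f : f = ps_add (z0 f) (ps_mul t (sh f)).
Proof. apply ps_ext3; intros i j k; unfold ps_add; rewrite ps_mul_t'; unfold z0, sh; destruct i; ring. Qed.

Lemma phi_z0 f : phi (z0 f) = z0 f.
Proof.
apply ps_ext3; intros i j k; unfold phi, z0.
destruct i as [|[|i]]; simpl; auto.
destruct (Nat.even i); auto.
Qed.

Lemma pow_le1 r n : 0 <= r <= 1 -> r ^ n <= 1.
Proof. intros H; rewrite <- (pow1 n); apply pow_incr; lra. Qed.

Lemma pow_le_dec r m n : 0 <= r <= 1 -> (m <= n)%nat -> r ^ n <= r ^ m.
Proof.
intros H Hmn. replace n with (m + (n - m))%nat by lia. rewrite pow_add.
pose proof (pow_le1 r (n - m) H). pose proof (pow_le r m ltac:(lra)).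
nra.
Qed.

Lemma bound_mono (x r r' M : R) n : 0 <= r' <= r -> Rabs x * r ^ n <= M -> Rabs x * r' ^ n <= M.
Proof.
intros H1 H2. pose proof (pow_incr r' r n H1). pose proof (Rabs_pos x). nra.
Qed.

Lemma conv_bound_M f r M : (forall i j k, Rabs (f i j k) * r ^ (i + j + k) <= M) -> 0 <= M.
Proof. intros H. specialize (H O O O). simpl in H. pose proof (Rabs_pos (f O O O)). lra. Qed.

Lemma conv_add f g : convergent f -> convergent g -> convergent (ps_add f g).
Proof.
intros [r1 [M1 [Hr1 H1]]] [r2 [M2 [Hr2 H2]]].
exists (Rmin r1 r2), (M1 + M2); split; [apply Rmin_pos; auto|].
intros i j k; unfold ps_add.
pose proof (bound_mono _ r1 (Rmin r1 r2) _ _ ltac:(split; [apply Rlt_le, Rmin_pos; auto| apply Rmin_l]) (H1 i j k)).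
pose proof (bound_mono _ r2 (Rmin r1 r2) _ _ ltac:(split; [apply Rlt_le, Rmin_pos; auto| apply Rmin_r]) (H2 i j k)).
pose proof (Rabs_triang (f i j k) (g i j k)).
pose proof (pow_le (Rmin r1 r2) (i + j + k) ltac:(apply Rlt_le, Rmin_pos; auto)).
nra.
Qed.

Lemma conv_opp f : convergent f -> convergent (ps_opp f).
Proof.
intros [r [M [Hr H]]]; exists r, M; split; auto; intros; unfold ps_opp; rewrite Rabs_Ropp; auto.
Qed.

Lemma conv_scale c f : convergent f -> convergent (ps_scale c f).
Proof.
intros [r [M [Hr H]]]; exists r, (Rabs c * M); split; auto; intros i j k; unfold ps_scale.
rewrite Rabs_mult, Rmult_assoc. apply Rmult_le_compat_l; [apply Rabs_pos| auto].
Qed.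

Lemma conv_one : convergent ps_one.
Proof.
exists 1, 1; split; [lra|]; intros i j k; rewrite pow1, Rmult_1_r.
destruct i, j, k; simpl; rewrite ?Rabs_R1, ?Rabs_R0; lra.
Qed.

Lemma conv_t : convergent ps_t.
Proof.
exists 1, 1; split; [lra|]; intros i j k; rewrite pow1, Rmult_1_r.
destruct i as [|[|i]], j, k; simpl; rewrite ?Rabs_R1, ?Rabs_R0; lra.
Qed.

Lemma conv_zero : convergent ps_zero.
Proof. exists 1, 0; split; [lra|]; intros; unfold ps_zero; rewrite Rabs_R0; lra. Qed.

Lemma conv_cst c : convergent (cst c).
Proof. apply conv_scale, conv_one. Qed.

Lemma conv_reindex f f' (p : nat -> nat) : convergent f ->
  (forall i, (p i <= 2 * i + 1)%nat) ->
  (forall i j k, f' i j k = 0 \/ f' i j k = f (p i) j k) -> convergent f'.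
Proof.
intros [r [M [Hr H]]] Hp Hf.
set (rho := Rmin r 1).
assert (Hrho : 0 < rho) by (apply Rmin_pos; lra).
assert (Hrho1 : rho <= 1) by apply Rmin_r.
assert (Hrhor : rho <= r) by apply Rmin_l.
exists (rho * rho), (M / rho); split; [nra|].
intros i j k.
assert (HM : 0 <= M) by (exact (conv_bound_M _ _ _ H)).
destruct (Hf i j k) as [E|E]; rewrite E.
- rewrite Rabs_R0, Rmult_0_l. apply Rmult_le_pos; [auto| apply Rlt_le, Rinv_0_lt_compat; auto].
- apply (Rmult_le_reg_r rho); auto.
  assert (E1 : M / rho * rho = M) by (field; lra).
  assert (E2 : (rho*rho)^(i+j+k) * rho = rho^(2*(i+j+k)+1)) by (rewrite (pow_add rho (2*(i+j+k)) 1), pow_sqr; simpl; ring).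
  rewrite Rmult_assoc, E2, E1.
  pose proof (pow_le_dec rho (p i + j + k) (2 * (i + j + k) + 1) ltac:(lra) ltac:(specialize (Hp i); lia)).
  pose proof (bound_mono _ r rho _ _ ltac:(lra) (H (p i) j k)).
  pose proof (Rabs_pos (f (p i) j k)). nra.
Qed.

Lemma conv_phi f : convergent f -> convergent (phi f).
Proof.
intros Hf; apply (conv_reindex f _ Nat.div2 Hf).
- intros i; pose proof (Nat.div2_odd i); lia.
- intros i j k; unfold phi; destruct (Nat.even i); auto.
Qed.
Lemma conv_ev f : convergent f -> convergent (ev f).
Proof. intros Hf; apply (conv_reindex f _ (fun i => 2 * i)%nat Hf); [intros; lia| intros; right; reflexivity]. Qed.
Lemma conv_od f : convergent f -> convergent (od f).
Proof. intros Hf; apply (conv_reindex f _ (fun i => S (2 * i))%nat Hf); [intros; lia| intros; right; reflexivity]. Qed.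
Lemma conv_sh f : convergent f -> convergent (sh f).
Proof. intros Hf; apply (conv_reindex f _ S Hf); [intros; lia| intros; right; reflexivity]. Qed.
Lemma conv_z0 f : convergent f -> convergent (z0 f).
Proof. intros Hf; apply (conv_reindex f _ (fun _ => O) Hf); [intros; lia| intros [|i] j k; simpl; auto]. Qed.

Lemma sumR_bound n u w C : 0 <= w -> (forall a, (a < n)%nat -> Rabs (u a) * w <= C) ->
  Rabs (sumR n u) * w <= INR n * C.
Proof.
intros Hw; induction n as [|n IH]; intros H; cbn [sumR].
- rewrite Rabs_R0; simpl; lra.
- pose proof (IH (fun a Ha => H a ltac:(lia))) as H1.
  pose proof (H n ltac:(lia)) as H2.
  pose proof (Rabs_triang (sumR n u) (u n)).
  rewrite S_INR. nra.
Qed.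

Lemma pow2_ge1 i : 1 <= 2 ^ i.
Proof. induction i; [rewrite pow_O; lra| rewrite <- tech_pow_Rmult; lra]. Qed.

Lemma INR_pow2 i : INR (S i) <= 2 ^ i.
Proof.
induction i; [simpl; lra|]. rewrite S_INR. change (2 ^ S i) with (2 * 2 ^ i). pose proof (pow_le 2 i ltac:(lra)).
pose proof (pow2_ge1 i). lra.
Qed.

Lemma conv_mul f g : convergent f -> convergent g -> convergent (ps_mul f g).
Proof.
intros [r1 [M1 [Hr1 H1]]] [r2 [M2 [Hr2 H2]]].
set (r0 := Rmin r1 r2).
assert (Hr0 : 0 < r0) by (apply Rmin_pos; auto).
assert (HM1 : 0 <= M1) by exact (conv_bound_M _ _ _ H1).
assert (HM2 : 0 <= M2) by exact (conv_bound_M _ _ _ H2).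
assert (H1' : forall i j k, Rabs (f i j k) * r0 ^ (i + j + k) <= M1).
{ intros; apply (bound_mono _ r1); auto; split; [lra| apply Rmin_l]. }
assert (H2' : forall i j k, Rabs (g i j k) * r0 ^ (i + j + k) <= M2).
{ intros; apply (bound_mono _ r2); auto; split; [lra| apply Rmin_r]. }
assert (Hb : forall i j k, Rabs (ps_mul f g i j k) * r0 ^ (i + j + k) <=
   INR (S i) * (INR (S j) * (INR (S k) * (M1 * M2)))).
{ intros i j k; unfold ps_mul.
  pose proof (pow_le r0 (i + j + k) ltac:(lra)) as Hp.
  apply sumR_bound; auto; intros a Ha.
  apply sumR_bound; auto; intros b Hb.
  apply sumR_bound; auto; intros c Hc.
  replace (i + j + k)%nat with ((a + b + c) + ((i - a) + (j - b) + (k - c)))%nat by lia.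
  rewrite pow_add, Rabs_mult.
  pose proof (H1' a b c). pose proof (H2' (i - a)%nat (j - b)%nat (k - c)%nat).
  pose proof (Rabs_pos (f a b c)). pose proof (Rabs_pos (g (i - a)%nat (j - b)%nat (k - c)%nat)).
  pose proof (pow_le r0 (a + b + c) ltac:(lra)).
  pose proof (pow_le r0 (i - a + (j - b) + (k - c)) ltac:(lra)).
  match goal with |- ?X * ?Y * (?P * ?Q) <= _ => replace (X * Y * (P * Q)) with ((X * P) * (Y * Q)) by ring end.
  apply Rmult_le_compat; auto; apply Rmult_le_pos; auto. }
exists (r0 / 2), (M1 * M2); split; [lra|].
intros i j k.
specialize (Hb i j k).
set (N := (i + j + k)%nat) in *.
assert (HP : INR (S i) * (INR (S j) * (INR (S k))) <= 2 ^ N).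
{ unfold N; rewrite !pow_add.
  pose proof (INR_pow2 i); pose proof (INR_pow2 j); pose proof (INR_pow2 k).
  pose proof (pos_INR (S i)); pose proof (pos_INR (S j)); pose proof (pos_INR (S k)).
  rewrite Rmult_assoc. apply Rmult_le_compat; try nra. }
assert (HMM : 0 <= M1 * M2) by nra.
assert (E : (r0 / 2) ^ N * 2 ^ N = r0 ^ N).
{ unfold Rdiv; rewrite <- Rpow_mult_distr. rewrite Rmult_assoc, Rinv_l, Rmult_1_r by lra. reflexivity. }
assert (H2N : 0 < 2 ^ N) by (apply pow_lt; lra).
apply (Rmult_le_reg_r (2 ^ N)); auto.
rewrite Rmult_assoc, E.
pose proof (pos_INR (S i)); pose proof (pos_INR (S j)); pose proof (pos_INR (S k)).
assert (INR (S i) * (INR (S j) * (INR (S k) * (M1 * M2))) <= 2 ^ N * (M1 * M2)).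
{ replace (INR (S i) * (INR (S j) * (INR (S k) * (M1 * M2)))) with
    ((INR (S i) * (INR (S j) * INR (S k))) * (M1 * M2)) by ring.
  apply Rmult_le_compat_r; auto. }
nra.
Qed.

Lemma in3_intro a b c f c1 c2 c3 : convergent c1 -> convergent c2 -> convergent c3 ->
  f = ps_add (ps_mul c1 a) (ps_add (ps_mul c2 b) (ps_mul c3 c)) ->
  in_ideal (a :: b :: c :: nil) f.
Proof.
intros H1 H2 H3 E; exists (c1 :: c2 :: c3 :: nil); split; [reflexivity|split].
- repeat constructor; auto.
- rewrite E; simpl; ring.
Qed.

Lemma in3_elim a b c f : in_ideal (a :: b :: c :: nil) f ->
  exists c1 c2 c3, convergent c1 /\ convergent c2 /\ convergent c3 /\
  f = ps_add (ps_mul c1 a) (ps_add (ps_mul c2 b) (ps_mul c3 c)).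
Proof.
intros [cs [Hl [Hc E]]].
destruct cs as [|c1 [|c2 [|c3 [|? ?]]]]; simpl in Hl; try discriminate.
inversion Hc as [|? ? Hc1 Hc']; subst. inversion Hc' as [|? ? Hc2 Hc'']; subst.
inversion Hc'' as [|? ? Hc3 _]; subst.
exists c1, c2, c3; repeat split; auto. simpl; ring.
Qed.

Definition L5 (a b c d e : ps) := a :: b :: c :: d :: e :: nil.

Lemma in5_intro a b c d e f c1 c2 c3 c4 c5 : convergent c1 -> convergent c2 -> convergent c3 ->
  convergent c4 -> convergent c5 ->
  f = ps_add (ps_mul c1 a) (ps_add (ps_mul c2 b) (ps_add (ps_mul c3 c) (ps_add (ps_mul c4 d) (ps_mul c5 e)))) ->
  in_ideal (L5 a b c d e) f.
Proof.
intros H1 H2 H3 H4 H5 E; exists (c1 :: c2 :: c3 :: c4 :: c5 :: nil); split; [reflexivity|split].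
- repeat constructor; auto.
- rewrite E; simpl; ring.
Qed.

Lemma in5_elim a b c d e f : in_ideal (L5 a b c d e) f ->
  exists c1 c2 c3 c4 c5, convergent c1 /\ convergent c2 /\ convergent c3 /\ convergent c4 /\ convergent c5 /\
  f = ps_add (ps_mul c1 a) (ps_add (ps_mul c2 b) (ps_add (ps_mul c3 c) (ps_add (ps_mul c4 d) (ps_mul c5 e)))).
Proof.
intros [cs [Hl [Hc E]]].
destruct cs as [|c1 [|c2 [|c3 [|c4 [|c5 [|? ?]]]]]]; simpl in Hl; try discriminate.
inversion Hc as [|? ? Hc1 Hc']; subst. inversion Hc' as [|? ? Hc2 Hc'']; subst.
inversion Hc'' as [|? ? Hc3 Hc3']; subst. inversion Hc3' as [|? ? Hc4 Hc4']; subst.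
inversion Hc4' as [|? ? Hc5 _]; subst.
exists c1, c2, c3, c4, c5; repeat split; auto. simpl; ring.
Qed.

Lemma in5_add a b c d e x y : in_ideal (L5 a b c d e) x -> in_ideal (L5 a b c d e) y ->
  in_ideal (L5 a b c d e) (ps_add x y).
Proof.
intros Hx Hy.
destruct (in5_elim _ _ _ _ _ _ Hx) as [c1 [c2 [c3 [c4 [c5 [H1 [H2 [H3 [H4 [H5 Ex]]]]]]]]]].
destruct (in5_elim _ _ _ _ _ _ Hy) as [d1 [d2 [d3 [d4 [d5 [K1 [K2 [K3 [K4 [K5 Ey]]]]]]]]]].
apply (in5_intro _ _ _ _ _ _ (ps_add c1 d1) (ps_add c2 d2) (ps_add c3 d3) (ps_add c4 d4) (ps_add c5 d5));
  try (apply conv_add; auto).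
rewrite Ex, Ey; ring.
Qed.

Lemma in5_mul a b c d e h x : convergent h -> in_ideal (L5 a b c d e) x ->
  in_ideal (L5 a b c d e) (ps_mul h x).
Proof.
intros Hh Hx.
destruct (in5_elim _ _ _ _ _ _ Hx) as [c1 [c2 [c3 [c4 [c5 [H1 [H2 [H3 [H4 [H5 Ex]]]]]]]]]].
apply (in5_intro _ _ _ _ _ _ (ps_mul h c1) (ps_mul h c2) (ps_mul h c3) (ps_mul h c4) (ps_mul h c5));
  try (apply conv_mul; auto).
rewrite Ex; ring.
Qed.

Lemma in_ideal_eq gs x y : in_ideal gs x -> x = y -> in_ideal gs y.
Proof. intros H E; subst; auto. Qed.

Lemma W_gens2 a b : W_gens (a :: b :: nil) = L5 a b (minor2 a b 0 1) (minor2 a b 0 2) (minor2 a b 1 2).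
Proof. reflexivity. Qed.

Ltac phi_simpl := repeat (rewrite ?phi_add, ?phi_opp, ?subst_mul, ?phi_cst, ?subst_t, ?phi_zero).
Ltac phi_simpl_in H := repeat (rewrite ?phi_add, ?phi_opp, ?subst_mul, ?phi_cst, ?subst_t, ?phi_zero in H).

Lemma stepA g1 g2 x : in_ideal (W_gens (g1 :: g2 :: nil)) x ->
  in_ideal (W_gens (phi g1 :: phi g2 :: nil)) (ps_mul t (phi x)).
Proof.
rewrite !W_gens2; intros Hx.
destruct (in5_elim _ _ _ _ _ _ Hx) as [c1 [c2 [c3 [c4 [c5 [H1 [H2 [H3 [H4 [H5 Ex]]]]]]]]]].
apply (in5_intro _ _ _ _ _ _ (ps_mul t (phi c1)) (ps_mul t (phi c2)) (ps_mul (cst (/2)) (phi c3))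
   (ps_mul (cst (/2)) (phi c4)) (ps_mul t (phi c5)));
  try (apply conv_mul; [apply conv_t || apply conv_cst | apply conv_phi; auto]).
rewrite minor01, minor02, minor12, Ex. phi_simpl. ring [half2].
Qed.

Lemma rc_app cs1 cs2 es1 es2 : length cs1 = length es1 ->
  real_comb (cs1 ++ cs2) (es1 ++ es2) = ps_add (real_comb cs1 es1) (real_comb cs2 es2).
Proof.
revert es1; induction cs1 as [|c cs1 IH]; intros [|e es1] Hl; simpl in *; try discriminate.
- ring.
- rewrite IH by lia; ring.
Qed.

Lemma rc_map (F : ps -> ps) cs es :
  (forall x y, F (ps_add x y) = ps_add (F x) (F y)) ->
  (forall c x, F (ps_scale c x) = ps_scale c (F x)) -> F ps_zero = ps_zero ->
  real_comb cs (map F es) = F (real_comb cs es).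
Proof.
intros HA HS HZ; revert es; induction cs as [|c cs IH]; intros [|e es]; simpl; auto.
rewrite HA, HS, IH; reflexivity.
Qed.

Lemma rc_phi cs es : real_comb cs (map phi es) = phi (real_comb cs es).
Proof. apply rc_map; [apply phi_add | apply phi_scale | apply phi_zero]. Qed.

Lemma rc_tphi cs es : real_comb cs (map (fun e => ps_mul t (phi e)) es) = ps_mul t (phi (real_comb cs es)).
Proof.
apply rc_map.
- intros; rewrite phi_add; ring.
- intros; rewrite phi_scale, !scale_cst; ring.
- rewrite phi_zero; ring.
Qed.

Lemma rc_ttphi cs es : real_comb cs (map (fun e => ps_mul t (ps_mul t (phi e))) es) =
  ps_mul t (ps_mul t (phi (real_comb cs es))).
Proof.
apply rc_map.
- intros; rewrite phi_add; ring.
- intros; rewrite phi_scale, !scale_cst; ring.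
- rewrite phi_zero; ring.
Qed.

Lemma Forall_conv_map (F : ps -> ps) es : (forall x, convergent x -> convergent (F x)) ->
  Forall convergent es -> Forall convergent (map F es).
Proof. intros HF H; induction H; simpl; constructor; auto. Qed.

Theorem proposition4p4 (g1 g2 : ps) :
  convergent g1 -> convergent g2 ->
  vanishes_at_0 g1 -> vanishes_at_0 g2 ->
  curve_alg_isolated_sing (g1 :: g2 :: nil) ->
  finite_codim (ps_t :: g1 :: g2 :: nil) ->
  finite_codim (ps_t :: subst_t_sq g1 :: subst_t_sq g2 :: nil) /\
  curve_alg_isolated_sing (subst_t_sq g1 :: subst_t_sq g2 :: nil).
Proof.
intros Hc1 Hc2 Hv1 Hv2 [_ [_ [Hprop [es [Hes HesP]]]]] [es2 [Hes2 Hes2P]].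
assert (FC3 : finite_codim (ps_t :: phi g1 :: phi g2 :: nil)).
{ exists (map phi es2); split; [apply Forall_conv_map; auto; apply conv_phi|].
  intros f Hf.
  destruct (Hes2P (z0 f) (conv_z0 f Hf)) as [cs [Hl Hin]].
  exists cs; split; [rewrite length_map; auto|].
  destruct (in3_elim _ _ _ _ Hin) as [a [b1 [b2 [Ha [Hb1 [Hb2 E]]]]]].
  apply (in3_intro _ _ _ _ (ps_add (sh f) (ps_mul t (phi a))) (phi b1) (phi b2));
    [apply conv_add; [apply conv_sh; auto| apply conv_mul; [apply conv_t| apply conv_phi; auto]]
    | apply conv_phi; auto | apply conv_phi; auto |].
  assert (E' := f_equal phi E). phi_simpl_in E'. rewrite phi_z0 in E'. phi_simpl.
  rewrite rc_phi. pose proof (z0_sh f) as Hf'.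
  set (zf := z0 f) in *. set (hf := sh f) in *.
  assert (Ez : zf = ps_add (phi (real_comb cs es2)) (ps_add zf (ps_opp (phi (real_comb cs es2))))) by ring.
  rewrite E' in Ez. rewrite Hf', Ez. ring. }
assert (FCW : finite_codim (W_gens (phi g1 :: phi g2 :: nil))).
{ exists (map phi es2 ++ (map (fun e => ps_mul t (ps_mul t (phi e))) es ++ map (fun e => ps_mul t (phi e)) es)).
  split.
  { apply Forall_app; split; [apply Forall_conv_map; auto; apply conv_phi|].
    apply Forall_app; split; apply Forall_conv_map; auto; intros x Hx.
    - apply conv_mul; [apply conv_t|apply conv_mul; [apply conv_t| apply conv_phi; auto]].
    - apply conv_mul; [apply conv_t| apply conv_phi; auto]. }
  intros f Hf.
  destruct (HesP (od f) (conv_od f Hf)) as [cs1 [Hl1 I1]].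
  destruct (Hes2P (ev f) (conv_ev f Hf)) as [cs2 [Hl2 I2]].
  destruct (in3_elim _ _ _ _ I2) as [a [b1 [b2 [Ha [Hb1 [Hb2 E]]]]]].
  destruct (HesP a Ha) as [csa [Hla Ia]].
  exists (cs2 ++ (csa ++ cs1)).
  split; [rewrite !length_app, !length_map; lia|].
  rewrite rc_app by (rewrite length_map; auto).
  rewrite rc_app by (rewrite length_map; auto).
  rewrite rc_phi, rc_tphi, rc_ttphi.
  pose proof (stepA _ _ _ I1) as K1.
  pose proof (stepA _ _ _ Ia) as K2.
  rewrite W_gens2 in *.
  apply (in5_mul _ _ _ _ _ t) in K2; [|apply conv_t].
  assert (K3 : in_ideal (L5 (phi g1) (phi g2) (minor2 (phi g1) (phi g2) 0 1) (minor2 (phi g1) (phi g2) 0 2) (minor2 (phi g1) (phi g2) 1 2))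
     (ps_add (ps_mul (phi b1) (phi g1)) (ps_mul (phi b2) (phi g2)))).
  { apply (in5_intro _ _ _ _ _ _ (phi b1) (phi b2) ps_zero ps_zero ps_zero);
      try apply conv_zero; try (apply conv_phi; auto). ring. }
  pose proof (in5_add _ _ _ _ _ _ _ (in5_add _ _ _ _ _ _ _ K1 K2) K3) as K.
  apply (in_ideal_eq _ _ _ K).
  assert (E' := f_equal phi E). phi_simpl_in E'. phi_simpl.
  pose proof (ev_od f) as Hf'.
  set (f0 := ev f) in *. set (f1 := od f) in *.
  assert (Ez : phi f0 = ps_add (phi (real_comb cs2 es2)) (ps_add (phi f0) (ps_opp (phi (real_comb cs2 es2))))) by ring.
  rewrite E' in Ez. rewrite Hf' at 1. rewrite Ez. ring. }
split; [exact FC3|].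
split; [repeat constructor; apply conv_phi; auto|].
split; [repeat constructor; unfold vanishes_at_0, subst_t_sq; simpl; auto|].
split; [|exact FCW].
intros Hin. apply Hprop. rewrite W_gens2 in *.
destruct (in5_elim _ _ _ _ _ _ Hin) as [c1 [c2 [c3 [c4 [c5 [H1 [H2 [H3 [H4 [H5 Ex]]]]]]]]]].
pose proof (ev_od c1) as E1. pose proof (ev_od c2) as E2. pose proof (ev_od c3) as E3.
pose proof (ev_od c4) as E4. pose proof (ev_od c5) as E5.
assert (C1 := conv_ev c1 H1). assert (C2 := conv_ev c2 H2). assert (C3 := conv_od c3 H3).
assert (C4 := conv_od c4 H4). assert (C5 := conv_ev c5 H5).
set (e1 := ev c1) in *. set (e2 := ev c2) in *. set (e3 := ev c3) in *. set (e4 := ev c4) in *.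
set (e5 := ev c5) in *.
set (o1 := od c1) in *. set (o2 := od c2) in *. set (o3 := od c3) in *. set (o4 := od c4) in *.
set (o5 := od c5) in *.
rewrite minor01, minor02, minor12 in Ex.
rewrite E1, E2, E3, E4, E5 in Ex.
set (m01 := minor2 g1 g2 0 1) in *. set (m02 := minor2 g1 g2 0 2) in *. set (m12 := minor2 g1 g2 1 2) in *.
set (A := ps_add (ps_mul e1 g1) (ps_add (ps_mul e2 g2) (ps_add (ps_mul (ps_mul (cst 2) (ps_mul t o3)) m01)
   (ps_add (ps_mul (ps_mul (cst 2) (ps_mul t o4)) m02) (ps_mul e5 m12))))).
set (B := ps_add (ps_mul o1 g1) (ps_add (ps_mul o2 g2) (ps_add (ps_mul (ps_mul (cst 2) e3) m01)
   (ps_add (ps_mul (ps_mul (cst 2) e4) m02) (ps_mul o5 m12))))).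
assert (HAB : ps_add (phi A) (ps_mul t (phi B)) = ps_one).
{ rewrite Ex. unfold A, B. phi_simpl. ring. }
apply ev_unique in HAB. rewrite ev_one in HAB.
rewrite <- HAB.
apply (in5_intro _ _ _ _ _ _ e1 e2 (ps_mul (cst 2) (ps_mul t o3)) (ps_mul (cst 2) (ps_mul t o4)) e5); auto;
  try (apply conv_mul; [apply conv_cst| apply conv_mul; [apply conv_t| auto]]).
Qed.
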